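(* Let $R$ be a commutative ring with $1$, $\overline{Q}$ the double quiver of a finite quiver $Q$, $Q_0'\subseteq Q_0$ a nonempty subset, $\lambda_i\in R$ for $i\in Q_0'$, and $A=R\overline{Q}/(\mu-\lambda)$. For every left $A$-module $V$, the sequence of left $A$-modules $$0\to V\xrightarrow{\epsilon}\bigoplus_{i\in Q_0}\mathrm{Hom}_R(e_iA,V_i)\xrightarrow{g}\bigoplus_{a\in\overline{Q}_1}\mathrm{Hom}_R(e_{ta}A,V_{ha})\xrightarrow{m}\bigoplus_{i\in Q_0'}\mathrm{Hom}_R(e_iA,V_i)$$ is exact, where for $p_i\in e_iA$: $\epsilon(v)(p_i)=p_iv$; $g(\kappa)_a(p_{ta})=\kappa_{ha}(a\,p_{ta})-a\,\kappa_{ta}(p_{ta})$; $m(\gamma)_i(p_i)=\sum_{a\in\overline{Q}_1:\,ta=i}(-1)^{|a|}\big(\overline{a}\,\gamma_a(p_i)+\gamma_{\overline{a}}(a\,p_i)\big)$.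
   Context: $Q$ is a finite quiver with vertex set $Q_0$, arrow set $Q_1$, tail and head maps $t,h:Q_1\to Q_0$. The double quiver $\overline{Q}$ has vertex set $Q_0$ and arrow set $\overline{Q}_1=Q_1\sqcup\{\overline{a}:a\in Q_1\}$ where $\overline{a}$ has $t\overline{a}=ha$, $h\overline{a}=ta$; set $\overline{\overline{a}}=a$. Define $|a|=0$ if $a\in Q_1$ and $|a|=1$ otherwise. A path is a word $a_1\cdots a_m$ of arrows with $ta_k=ha_{k+1}$; $hp=ha_1$, $tp=ta_m$; there is a trivial path $e_i$ with $he_i=te_i=i$ for each vertex. The path algebra $R\overline{Q}$ is the free $R$-module on paths with product $p\cdot q=pq$ (concatenation) if $tp=hq$ and $0$ otherwise, $pe_{tp}=p=e_{hp}p$. $(\mu-\lambda)$ denotes the two-sided ideal generated by the single element $\sum_{i\in Q_0'}\big(\sum_{a\in\overline{Q}_1:ha=i}(-1)^{|a|}a\overline{a}-\lambda_ie_i\big)$, and $A=R\overline{Q}/(\mu-\lambda)$. For an $A$-module $V$, $V_i:=e_iV$. The right $A$-module $e_iA$ makes $\mathrm{Hom}_R(e_iA,V_j)$ a left $A$-module via $(x\cdot\kappa)(p)=\kappa(px)$. *)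

(* Defs.v *)
From HB Require Import structures.
From mathcomp Require Import all_boot all_order all_algebra.
Set Implicit Arguments. Unset Strict Implicit. Unset Printing Implicit Defensive.
Import GRing.Theory.
Local Open Scope ring_scope.

Section DoubleQuiver.
Variables (Q0 Q1 : finType) (t h : Q1 -> Q0).

(* Arrows of the double quiver: inl a = a, inr a = abar. *)
Definition darrow := (Q1 + Q1)%type.
Definition dt (a : darrow) : Q0 := match a with inl b => t b | inr b => h b end.
Definition dh (a : darrow) : Q0 := match a with inl b => h b | inr b => t b end.
Definition dbar (a : darrow) : darrow :=
  match a with inl b => inr b | inr b => inl b end.
Definition dsgn (a : darrow) : nat := match a with inl _ => 0%N | inr _ => 1%N end.

(* Paths: a vertex together with a word a_1 ... a_m of arrows,
   t a_k = h a_{k+1}; for m > 0 the vertex is h a_1, for m = 0 the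
   pair (i, [::]) is the trivial qpath e_i. *)
Fixpoint chain (s : seq darrow) : bool :=
  match s with
  | a :: ((b :: _) as s') => (dt a == dh b) && chain s'
  | _ => true
  end.
Definition valid (x : Q0 * seq darrow) : bool :=
  chain x.2 && (if x.2 is a :: _ then x.1 == dh a else true).
Definition qpath := {x : Q0 * seq darrow | valid x}.

Definition phead (p : qpath) : Q0 := (val p).1.
Definition ptail (p : qpath) : Q0 := last (val p).1 [seq dt a | a <- (val p).2].

Lemma epath_valid (i : Q0) : valid (i, [::]).
Proof. by []. Qed.
Lemma apath_valid (a : darrow) : valid (dh a, [:: a]).
Proof. by rewrite /valid /= eqxx. Qed.

Definition epath (i : Q0) : qpath := exist _ (i, [::]) (epath_valid i).
Definition apath (a : darrow) : qpath := exist _ (dh a, [:: a]) (apath_valid a).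

(* product of paths in the qpath algebra: pq if tp = hq, 0 (None) otherwise *)
Definition pmul (p q : qpath) : option qpath :=
  if ptail p == phead q then insub (phead p, (val p).2 ++ (val q).2) else None.
Definition omul (o1 o2 : option qpath) : option qpath :=
  match o1, o2 with Some p, Some q => pmul p q | _, _ => None end.

Section Modules.
Variables (R : comPzRingType) (V : lmodType R).

(* R-linear extension of a function on paths, evaluated at a qpath or 0 *)
Definition evo (f : qpath -> V) (o : option qpath) : V :=
  match o with Some p => f p | None => 0 end.

(* A left A-module, A = R Qbar / (mu - lambda): an R-module V with an
   action of every qpath (i.e. of the R-basis of R Qbar) which is an
   R-algebra homomorphism R Qbar -> End_R(V) (R-linear, multiplicative on
   the basis, unital: sum_i e_i = 1) and kills the generator
   sum_{i in Q0'} (sum_{ha = i} (-1)^|a| a abar - lambda_i e_i). *)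
Definition is_Amodule (Q0' : {set Q0}) (lambda : Q0 -> R)
    (act : qpath -> V -> V) : Prop :=
  [/\ forall p (c : R) (u v : V), act p (c *: u + v) = c *: act p u + act p v,
      forall v, \sum_(i : Q0) act (epath i) v = v,
      forall p q v, act p (act q v) = evo (fun r => act r v) (pmul p q)
    & forall v,
      \sum_(i in Q0')
        (\sum_(a : darrow | dh a == i)
            (-1) ^+ dsgn a *: act (apath a) (act (apath (dbar a)) v)
         - lambda i *: act (epath i) v) = 0].

(* An element of Hom_R(e_i A, V_j), represented by its values on the paths
   p with h p = i (an R-basis of e_i R Qbar), extended by 0 to the other
   paths.  The values lie in V_j = e_j V and the induced R-linear map on
   e_i R Qbar kills every element x (mu - lambda) y (x, y paths), i.e. the
   ideal, so that it factors through e_i A. *)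
Definition is_Hom (Q0' : {set Q0}) (lambda : Q0 -> R)
    (act : qpath -> V -> V) (i j : Q0) (k : qpath -> V) : Prop :=
  [/\ forall p, phead p != i -> k p = 0,
      forall p, act (epath j) (k p) = k p
    & forall x y : qpath,
      \sum_(l in Q0')
        (\sum_(a : darrow | dh a == l)
            (-1) ^+ dsgn a *: evo k (omul (omul (Some x) (Some (apath a)))
                                       (omul (Some (apath (dbar a))) (Some y)))
         - lambda l *: evo k (omul (omul (Some x) (Some (epath l))) (Some y)))
      = 0].

(* left A-module structure on Hom_R(e_i A, W): (x . k)(p) = k(p x) *)
Definition homact (x : qpath) (k : qpath -> V) : qpath -> V :=
  fun p => evo k (pmul p x).

Variable act : qpath -> V -> V.
Variable Q0' : {set Q0}.

Definition epsmap (v : V) : Q0 -> qpath -> V :=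
  fun i p => if phead p == i then act p v else 0.

Definition gmap (kappa : Q0 -> qpath -> V) : darrow -> qpath -> V :=
  fun a p => if phead p == dt a then
    evo (kappa (dh a)) (pmul (apath a) p) - act (apath a) (kappa (dt a) p)
    else 0.

(* m(gamma)_i (p_i) = sum_{ta = i} (-1)^|a| (abar gamma_a(p_i) + gamma_abar(a p_i)),
   components indexed by i in Q0' (and set to 0 outside Q0') *)
Definition mmap (gamma : darrow -> qpath -> V) : Q0 -> qpath -> V :=
  fun i p => if (i \in Q0') && (phead p == i) then
    \sum_(a : darrow | dt a == i)
      (-1) ^+ dsgn a *: (act (apath (dbar a)) (gamma a p)
                         + evo (gamma (dbar a)) (pmul (apath a) p))
    else 0.

End Modules.
End DoubleQuiver.

(* Main.v *)
Require Import Defs.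
From HB Require Import structures.
From mathcomp Require Import all_boot all_order all_algebra.
Import GRing.Theory.
Local Open Scope ring_scope.
Set Implicit Arguments. Unset Strict Implicit. Unset Printing Implicit Defensive.

Section Paths.
Variables (Q0 Q1 : finType) (t h : Q1 -> Q0).
Local Notation qp := (qpath t h).
Local Notation dt := (dt t h).
Local Notation dh := (dh t h).
Local Notation valid := (valid t h).

Lemma valid_cons i a s : valid (i, a :: s) = (i == dh a) && valid (dt a, s).
Proof.
rewrite /Defs.valid /=; case: s => [|b s] /=; first by rewrite andbT.
by case: (i == _); case: (dt a == _); rewrite /= ?andbT ?andbF.
Qed.

Lemma valid_cat i s1 s2 :
  valid (i, s1) -> valid (last i [seq dt a | a <- s1], s2) -> valid (i, s1 ++ s2).
Proof.
elim: s1 i => [|a s1 IH] i //= .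
rewrite !valid_cons => /andP[-> H1] H2; rewrite /=.
exact: IH.
Qed.

Lemma dt_dbar a : dt (dbar a) = dh a. Proof. by case: a. Qed.
Lemma dh_dbar a : dh (dbar a) = dt a. Proof. by case: a. Qed.
Lemma dbarK : involutive (@dbar Q1). Proof. by case. Qed.

Lemma phead_apath a : phead (apath t h a) = dh a. Proof. by []. Qed.
Lemma ptail_apath a : ptail (apath t h a) = dt a. Proof. by []. Qed.
Lemma phead_epath i : phead (epath t h i) = i. Proof. by []. Qed.
Lemma ptail_epath i : ptail (epath t h i) = i. Proof. by []. Qed.

Lemma pmul_none (p q : qp) : ptail p != phead q -> pmul p q = None.
Proof. by rewrite /pmul => /negbTE ->. Qed.

Lemma pmul_inv (p q r : qp) : pmul p q = Some r ->
  ptail p = phead q /\ val r = (phead p, (val p).2 ++ (val q).2).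
Proof.
rewrite /pmul; case: eqP => // E; case: insubP => //= u _ Hu [<-]; by [].
Qed.

Lemma pmul_some (p q : qp) : ptail p = phead q ->
  {r | pmul p q = Some r & val r = (phead p, (val p).2 ++ (val q).2)}.
Proof.
move=> E; have V : valid (phead p, (val p).2 ++ (val q).2).
  apply: valid_cat; first by case: (p) => [[j s]].
  by rewrite -/(ptail p) E /phead; case: (q) => [[j s]].
by exists (exist (fun x => is_true (Defs.valid t h x)) _ V) => //; rewrite /pmul E eqxx insubT.
Qed.

Lemma pmul_phead (p q r : qp) : pmul p q = Some r -> phead r = phead p.
Proof. by case/pmul_inv=> _ E; rewrite /phead E. Qed.

Lemma pmul_ptail (p q r : qp) : pmul p q = Some r -> ptail r = ptail q.
Proof.
case/pmul_inv=> E1 E2; rewrite /ptail E2 /= map_cat last_cat.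
by rewrite -/(ptail p) E1.
Qed.

Lemma omul_assoc (x y z : option qp) :
  omul (omul x y) z = omul x (omul y z).
Proof.
case: x => [x|]; last by case: y => [y|] //; case: z.
case: y => [y|]; last by case: z.
case: z => [z|] /=; last by case: (pmul x y).
have [Exy|Nxy] := eqVneq (ptail x) (phead y).
  have [xy Hxy Vxy] := pmul_some Exy; rewrite Hxy /=.
  have [Eyz|Nyz] := eqVneq (ptail y) (phead z).
    have [yz Hyz Vyz] := pmul_some Eyz; rewrite Hyz /=.
    have E1 : ptail xy = phead z by rewrite (pmul_ptail Hxy).
    have E2 : ptail x = phead yz by rewrite (pmul_phead Hyz).
    have [r1 H1 V1] := pmul_some E1; have [r2 H2 V2] := pmul_some E2.
    rewrite H1 H2; congr Some; apply: val_inj; rewrite V1 V2 Vxy Vyz /=.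
    by rewrite catA /phead Vxy.
  rewrite pmul_none ?pmul_none //; by rewrite (pmul_ptail Hxy).
rewrite (pmul_none Nxy); case Hyz: (pmul y z) => [yz|] //=.
by rewrite pmul_none // (pmul_phead Hyz).
Qed.

Lemma pmul_epath_l i (p : qp) : phead p = i -> pmul (epath t h i) p = Some p.
Proof.
move=> E; have [r H V] := @pmul_some (epath t h i) p (esym E); rewrite H; congr Some.
apply: val_inj; rewrite V /= -E /phead /=; by case: (sval p).
Qed.

Lemma pmul_epath_r i (p : qp) : ptail p = i -> pmul p (epath t h i) = Some p.
Proof.
move=> E; have [r H V] := @pmul_some p (epath t h i) E; rewrite H; congr Some.
apply: val_inj; rewrite V /= cats0 /phead; by case: p {E H V} => [[]].
Qed.

Lemma pmul_apath a (p : qp) : phead p = dt a ->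
  {r | pmul (apath t h a) p = Some r & val r = (dh a, a :: (val p).2)}.
Proof. by move=> E; have [r H V] := @pmul_some (apath t h a) p (esym E); exists r. Qed.

Lemma path_decomp (p : qp) a s : (val p).2 = a :: s ->
  {p' : qp | val p' = (dt a, s) & pmul (apath t h a) p' = Some p}.
Proof.
case: p => [[i s0]] /= Vp E; subst s0; have := Vp; rewrite valid_cons => /andP[/eqP Ei Vs].
exists (exist (fun x => is_true (Defs.valid t h x)) _ Vs) => //.
have [r H V] := pmul_apath (p := exist (fun x => is_true (Defs.valid t h x)) _ Vs) (erefl _); rewrite H; congr Some.
by apply: val_inj; rewrite V /= -Ei.
Qed.

Lemma path_nil (p : qp) : (val p).2 = [::] -> p = epath t h (phead p).
Proof. by case: p => [[i s]] /= ? E; apply: val_inj => /=; rewrite /phead /= E. Qed.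

End Paths.


Section LinF.
Variables (R : comPzRingType) (V : lmodType R) (f : V -> V).
Hypothesis Hf : forall (c : R) u v, f (c *: u + v) = c *: f u + f v.
Lemma linf0 : f 0 = 0.
Proof. by have := Hf (-1) 0 0; rewrite scaler0 add0r scaleN1r addNr. Qed.
Lemma linfD u v : f (u + v) = f u + f v.
Proof. by have := Hf 1 u v; rewrite !scale1r. Qed.
Lemma linfZ c u : f (c *: u) = c *: f u.
Proof. by have := Hf c u 0; rewrite !addr0 linf0 addr0. Qed.
Lemma linfN u : f (- u) = - f u.
Proof. by rewrite -scaleN1r linfZ scaleN1r. Qed.
Lemma linfB u v : f (u - v) = f u - f v.
Proof. by rewrite linfD linfN. Qed.
Lemma linf_sum (I : Type) (r : seq I) (P : pred I) (F : I -> V) :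
  f (\sum_(i <- r | P i) F i) = \sum_(i <- r | P i) f (F i).
Proof. exact: (big_morph f linfD linf0). Qed.
End LinF.

Section Mod.
Variables (Q0 Q1 : finType) (t h : Q1 -> Q0).
Variables (R : comPzRingType) (V : lmodType R) (act : qpath t h -> V -> V).
Variables (Q0' : {set Q0}) (lambda : Q0 -> R).
Hypothesis HA : is_Amodule Q0' lambda act.
Local Notation qp := (qpath t h).
Local Notation dt := (dt t h).
Local Notation dh := (dh t h).
Local Notation ap := (apath t h).
Local Notation ep := (epath t h).

Lemma actL p : forall (c : R) u v, act p (c *: u + v) = c *: act p u + act p v.
Proof. by case: HA. Qed.
Lemma act0 p : act p 0 = 0. Proof. exact: linf0 (actL p). Qed.
Lemma actD p u v : act p (u + v) = act p u + act p v. Proof. by apply: linfD; apply: actL. Qed.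
Lemma actZ p c u : act p (c *: u) = c *: act p u. Proof. by apply: linfZ; apply: actL. Qed.
Lemma actN p u : act p (- u) = - act p u. Proof. by apply: linfN; apply: actL. Qed.
Lemma actB p u v : act p (u - v) = act p u - act p v. Proof. by apply: linfB; apply: actL. Qed.
Lemma act_sum p (I : Type) (r : seq I) (P : pred I) (F : I -> V) :
  act p (\sum_(i <- r | P i) F i) = \sum_(i <- r | P i) act p (F i).
Proof. by apply: linf_sum; apply: actL. Qed.

Definition actO (o : option qp) v := evo (fun r => act r v) o.

Lemma act_mul p q v : act p (act q v) = actO (pmul p q) v.
Proof. by case: HA. Qed.

Lemma actO_mul o1 o2 v : actO (omul o1 o2) v = actO o1 (actO o2 v).
Proof.
case: o1 => [p|] //; case: o2 => [q|] /=; first by rewrite act_mul.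
by rewrite act0.
Qed.

Lemma act_sume v : \sum_(i : Q0) act (ep i) v = v.
Proof. by case: HA. Qed.

Lemma act_e_l i p v : act (ep i) (act p v) = if phead p == i then act p v else 0.
Proof.
rewrite act_mul; case: eqP => E; first by rewrite pmul_epath_l.
by rewrite pmul_none //= ptail_epath eq_sym; apply/eqP.
Qed.

Lemma act_e_r p j v : act p (act (ep j) v) = if ptail p == j then act p v else 0.
Proof.
rewrite act_mul; case: eqP => E; first by rewrite pmul_epath_r.
by rewrite pmul_none //= phead_epath; apply/eqP.
Qed.

Lemma act_inV p j w : act (ep j) w = w -> ptail p != j -> act p w = 0.
Proof. by move=> Hw /negbTE N; rewrite -Hw act_e_r N. Qed.

Lemma act_e_ap a w : act (ep (dh a)) (act (ap a) w) = act (ap a) w.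
Proof. by rewrite act_e_l phead_apath eqxx. Qed.

Definition Rel l w := \sum_(a : darrow Q1 | dh a == l)
            (-1) ^+ dsgn a *: act (ap a) (act (ap (dbar a)) w)
         - lambda l *: act (ep l) w.

Lemma Rel_all w : \sum_(l in Q0') Rel l w = 0.
Proof. by case: HA => _ _ _; apply. Qed.

Lemma Rel_other l j w : l != j -> act (ep j) w = w -> Rel l w = 0.
Proof.
move=> N Hw; rewrite /Rel big1 ?sub0r.
  by rewrite (act_inV Hw) ?scaler0 ?oppr0 // ptail_epath.
move=> a /eqP E; rewrite (act_inV Hw) ?act0 ?scaler0 //.
by rewrite ptail_apath dt_dbar E.
Qed.

Lemma Rel_single l w : l \in Q0' -> act (ep l) w = w -> Rel l w = 0.
Proof.
move=> Hl Hw; have := Rel_all w; rewrite (bigD1 l) //= big1 ?addr0 //.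
by move=> j /andP[_ N]; apply: Rel_other Hw.
Qed.

Definition T l (F : option qp -> V) (y : qp) :=
  \sum_(a : darrow Q1 | dh a == l)
     (-1) ^+ dsgn a *: F (omul (Some (ap a)) (omul (Some (ap (dbar a))) (Some y)))
  - lambda l *: F (omul (Some (ep l)) (Some y)).
Definition KF F y := \sum_(l in Q0') T l F y.

Lemma kill_KF (k : qp -> V) x y :
  \sum_(l in Q0')
        (\sum_(a : darrow Q1 | dh a == l)
            (-1) ^+ dsgn a *: evo k (omul (omul (Some x) (Some (ap a)))
                                       (omul (Some (ap (dbar a))) (Some y)))
         - lambda l *: evo k (omul (omul (Some x) (Some (ep l))) (Some y)))
  = KF (fun o => evo k (omul (Some x) o)) y.
Proof.
apply: eq_bigr => l _; rewrite /T omul_assoc; congr (_ - _).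
by apply: eq_bigr => a _; rewrite omul_assoc.
Qed.

Lemma KF_lin (f : V -> V) F y :
  (forall (c : R) u v, f (c *: u + v) = c *: f u + f v) ->
  KF (fun o => f (F o)) y = f (KF F y).
Proof.
move=> Hf; rewrite /KF (linf_sum Hf); apply: eq_bigr => l _.
rewrite /T (linfB Hf) (linfZ Hf) (linf_sum Hf); congr (_ - _).
by apply: eq_bigr => a _; rewrite (linfZ Hf).
Qed.

Lemma KF_add F G y : KF (fun o => F o + G o) y = KF F y + KF G y.
Proof.
rewrite /KF -big_split; apply: eq_bigr => l _; rewrite /T scalerDr.
rewrite /=; under eq_bigr do rewrite scalerDr.
by rewrite big_split /= opprD addrACA.
Qed.

Lemma KF_opp F y : KF (fun o => - F o) y = - KF F y.
Proof. by apply: (KF_lin (f := -%R)) => c u v; rewrite opprD scalerN. Qed.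

Lemma KF_sub F G y : KF (fun o => F o - G o) y = KF F y - KF G y.
Proof. by rewrite KF_add KF_opp. Qed.

Lemma T_other l F y : F None = 0 -> l != phead y -> T l F y = 0.
Proof.
move=> F0 N; rewrite /T big1 ?sub0r.
  by rewrite /= pmul_none ?F0 ?scaler0 ?oppr0 // ptail_epath.
move=> a /eqP E; rewrite /= pmul_none ?F0 ?scaler0 //.
by rewrite ptail_apath dt_dbar E.
Qed.

Lemma KF_out F y : F None = 0 -> phead y \notin Q0' -> KF F y = 0.
Proof.
move=> F0 N; rewrite /KF big1 // => l Hl; apply: T_other => //.
by apply: contraNneq N => <-.
Qed.

Lemma KF_in F y : F None = 0 -> phead y \in Q0' -> KF F y = T (phead y) F y.
Proof.
move=> F0 Hy; rewrite /KF (bigD1 (phead y)) //= big1 ?addr0 //.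
by move=> l /andP[_ N]; apply: T_other.
Qed.


Local Notation Hom := (is_Hom Q0' lambda act).

Lemma KF_ext (F G : option qp -> V) y : (forall o, F o = G o) -> KF F y = KF G y.
Proof.
move=> E; rewrite /KF; apply: eq_bigr => l _; rewrite /T !E.
by congr (_ - _); apply: eq_bigr => a _; rewrite E.
Qed.

Lemma KF0 (y : qp) : KF (fun _ : option qp => (0 : V)) y = 0.
Proof.
have := @KF_lin (fun _ => 0) (fun _ => 0) y.
by move=> ->// c u v; rewrite scaler0 addr0.
Qed.

Lemma KF_sum (I : Type) (r : seq I) (P : pred I) (G : I -> option qp -> V) y :
  KF (fun o => \sum_(a <- r | P a) G a o) y = \sum_(a <- r | P a) KF (G a) y.
Proof.
elim: r => [|a r IH].
  rewrite [RHS]big_nil; transitivity (KF (fun _ : option qp => (0:V)) y); last exact: KF0.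
  by apply: KF_ext => o; rewrite big_nil.
rewrite [RHS]big_cons.
transitivity (KF (fun o => if P a then G a o + \sum_(a0 <- r | P a0) G a0 o
                           else \sum_(a0 <- r | P a0) G a0 o) y).
  by apply: KF_ext => o; rewrite big_cons.
by case: (P a); rewrite -IH // -KF_add.
Qed.

Lemma KF_scale c (F : option qp -> V) (y : qp) : KF (fun o => c *: F o) y = c *: KF F y.
Proof.
apply: (@KF_lin (fun u => c *: u)) => d u v.
by rewrite scalerDr !scalerA mulrC.
Qed.

Lemma evo_ext (f g : qp -> V) o : (forall q, f q = g q) -> evo f o = evo g o.
Proof. by case: o => //= q ->. Qed.

Lemma evo_lin (c : R) (f g : qp -> V) o :
  evo (fun q => c *: f q + g q) o = c *: evo f o + evo g o.
Proof. by case: o => //=; rewrite scaler0 addr0. Qed.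

Lemma omul_phead (x : qp) o r : omul (Some x) o = Some r -> phead r = phead x.
Proof. by case: o => //= q /pmul_phead. Qed.

Lemma evo_omul_gen (phi : qp -> V) (Phi : option qp -> V) (P : pred Q0) x o :
  Phi None = 0 -> (forall r, phi r = if P (phead r) then Phi (Some r) else 0) ->
  evo phi (omul (Some x) o) = if P (phead x) then Phi (omul (Some x) o) else 0.
Proof.
move=> P0 E; case H: (omul (Some x) o) => [r|] /=; last by rewrite P0; case: ifP.
by rewrite E (omul_phead H).
Qed.

Lemma sign_dbar (a : darrow Q1) : (-1) ^+ dsgn (dbar a) = - (-1) ^+ dsgn a :> R.
Proof. by case: a => a /=; rewrite ?expr0 ?expr1 ?opprK. Qed.

Lemma reindex_dbar (P : pred (darrow Q1)) (F : darrow Q1 -> V) :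
  \sum_(a | P a) F a = \sum_(b | P (dbar b)) F (dbar b).
Proof. exact: (reindex_inj (inv_inj (@dbarK Q1))). Qed.


Lemma Hom_kill i j k : Hom i j k ->
  forall ox y, KF (fun o => evo k (omul ox o)) y = 0.
Proof.
case=> _ _ H [x|] y; first by rewrite -kill_KF; apply: H.
by rewrite -(KF0 y); apply: KF_ext.
Qed.

Lemma Hom_off i j k : Hom i j k -> forall p, phead p != i -> k p = 0.
Proof. by case. Qed.
Lemma Hom_in i j k : Hom i j k -> forall p, act (ep j) (k p) = k p.
Proof. by case. Qed.

Lemma mk_Hom i j k : (forall p, phead p != i -> k p = 0) ->
  (forall p, act (ep j) (k p) = k p) ->
  (forall x y, KF (fun o => evo k (omul (Some x) o)) y = 0) -> Hom i j k.
Proof. by move=> H1 H2 H3; split=> // x y; rewrite kill_KF. Qed.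

Lemma evo_ep i (k : qp -> V) o : (forall p, phead p != i -> k p = 0) ->
  evo k (omul (Some (ep i)) o) = evo k o.
Proof.
move=> H; case: o => [q|] //=; have [E|N] := eqVneq (phead q) i.
  by rewrite pmul_epath_l.
by rewrite pmul_none ?H // ptail_epath eq_sym.
Qed.

Lemma evo_inV j (k : qp -> V) o : (forall q, act (ep j) (k q) = k q) ->
  act (ep j) (evo k o) = evo k o.
Proof. by move=> H; case: o => [q|] /=; rewrite ?H ?act0. Qed.

Lemma KF_actO v y : KF (fun o => actO o v) y = 0.
Proof.
case: (boolP (phead y \in Q0')) => Hy; last by rewrite KF_out.
rewrite KF_in // -(@Rel_single (phead y) (act y v)) //;
  last by rewrite act_e_l eqxx.
rewrite /T /Rel; congr (_ - _); last by rewrite actO_mul.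
by apply: eq_bigr => a _; rewrite !actO_mul.
Qed.

Lemma eps_hom v i : Hom i i (epsmap act v i).
Proof.
apply: mk_Hom.
- by move=> p N; rewrite /epsmap (negbTE N).
- move=> p; rewrite /epsmap; case: eqP => [<-|_]; last by rewrite act0.
  by rewrite act_e_l eqxx.
move=> x y.
have E o : evo (epsmap act v i) (omul (Some x) o) =
   (if phead x == i then act x (actO o v) else 0).
  rewrite (@evo_omul_gen _ (fun o => actO o v) (fun j => j == i)) //.
  by rewrite actO_mul.
case: (boolP (phead x == i)) => Hx.
  rewrite (@KF_ext _ (fun o => act x (actO o v))) => [|o]; last by rewrite E Hx.
  by rewrite (@KF_lin (act x)) ?KF_actO ?act0 //; apply: actL.
rewrite (@KF_ext _ (fun o => 0)) => [|o]; last by rewrite E (negbTE Hx).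
exact: KF0.
Qed.


Lemma Hom_kill2 i j k : Hom i j k ->
  forall x1 x2 y, KF (fun o => evo k (omul (Some x1) (omul (Some x2) o))) y = 0.
Proof.
move=> Hk x1 x2 y.
rewrite (@KF_ext _ (fun o => evo k (omul (omul (Some x1) (Some x2)) o))) => [|o].
  exact: Hom_kill Hk _ y.
by rewrite omul_assoc.
Qed.

Lemma evo_gmap kappa a x o : evo (gmap act kappa a) (omul (Some x) o) =
  if phead x == dt a then
    evo (kappa (dh a)) (omul (Some (ap a)) (omul (Some x) o))
    - act (ap a) (evo (kappa (dt a)) (omul (Some x) o))
  else 0.
Proof.
rewrite (@evo_omul_gen _ (fun o => evo (kappa (dh a)) (omul (Some (ap a)) o)
    - act (ap a) (evo (kappa (dt a)) o)) (fun j => j == dt a)) //=.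
by rewrite act0 subr0.
Qed.

Lemma g_hom kappa : (forall i, Hom i i (kappa i)) ->
  forall a, Hom (dt a) (dh a) (gmap act kappa a).
Proof.
move=> Hk a; apply: mk_Hom.
- by move=> p N; rewrite /gmap (negbTE N).
- move=> p; rewrite /gmap; case: ifP => _; last by rewrite act0.
  by rewrite actB act_e_ap evo_inV //; apply: Hom_in (Hk (dh a)).
move=> x y; case: (boolP (phead x == dt a)) => Hx.
  rewrite (@KF_ext _ (fun o => evo (kappa (dh a)) (omul (Some (ap a)) (omul (Some x) o))
    - act (ap a) (evo (kappa (dt a)) (omul (Some x) o)))) => [|o]; last by rewrite evo_gmap Hx.
  rewrite KF_sub (@KF_lin (act (ap a)) (fun o => evo (kappa (dt a)) (omul (Some x) o))); last exact: actL.
  by rewrite (Hom_kill2 (Hk (dh a))) (Hom_kill (Hk (dt a))) act0 subr0.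
rewrite (@KF_ext _ (fun o => 0)) => [|o]; last by rewrite evo_gmap (negbTE Hx).
exact: KF0.
Qed.

Lemma evo_mmap gamma i x o : i \in Q0' ->
  evo (mmap act Q0' gamma i) (omul (Some x) o) =
  if phead x == i then
    \sum_(a : darrow Q1 | dt a == i) (-1) ^+ dsgn a *:
       (act (ap (dbar a)) (evo (gamma a) (omul (Some x) o))
        + evo (gamma (dbar a)) (omul (Some (ap a)) (omul (Some x) o)))
  else 0.
Proof.
move=> Hi.
rewrite (@evo_omul_gen _ (fun o => \sum_(a : darrow Q1 | dt a == i) (-1) ^+ dsgn a *:
       (act (ap (dbar a)) (evo (gamma a) o)
        + evo (gamma (dbar a)) (omul (Some (ap a)) o)))
      (fun j => (i \in Q0') && (j == i))) ?Hi //=.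
  by rewrite big1 // => a _; rewrite act0 addr0 scaler0.
by move=> r; rewrite /mmap Hi.
Qed.

Lemma m_hom gamma : (forall a, Hom (dt a) (dh a) (gamma a)) ->
  forall i, i \in Q0' -> Hom i i (mmap act Q0' gamma i).
Proof.
move=> Hg i Hi; apply: mk_Hom.
- by move=> p N; rewrite /mmap (negbTE N) andbF.
- move=> p; rewrite /mmap Hi /=; case: ifP => _; last by rewrite act0.
  rewrite act_sum; apply: eq_bigr => a /eqP E.
  have H2 := Hom_in (Hg (dbar a)); rewrite dh_dbar E in H2.
  by rewrite actZ actD act_e_l phead_apath dh_dbar E eqxx evo_inV.
move=> x y; case: (boolP (phead x == i)) => Hx.
  rewrite (@KF_ext _ (fun o => \sum_(a : darrow Q1 | dt a == i) (-1) ^+ dsgn a *: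
       (act (ap (dbar a)) (evo (gamma a) (omul (Some x) o))
        + evo (gamma (dbar a)) (omul (Some (ap a)) (omul (Some x) o))))) => [|o];
    last by rewrite evo_mmap // Hx.
  rewrite KF_sum big1 // => a _.
  rewrite KF_scale KF_add (@KF_lin (act (ap (dbar a))) (fun o => evo (gamma a) (omul (Some x) o))); last exact: actL.
  by rewrite (Hom_kill (Hg a)) (Hom_kill2 (Hg (dbar a))) act0 addr0 scaler0.
rewrite (@KF_ext _ (fun o => 0)) => [|o]; last by rewrite evo_mmap // (negbTE Hx).
exact: KF0.
Qed.


Lemma evo_homact (k : qp -> V) x o :
  evo (homact x k) o = evo k (omul o (Some x)).
Proof. by case: o. Qed.

Lemma eps_lin (c : R) v w i p :
  epsmap act (c *: v + w) i p = c *: epsmap act v i p + epsmap act w i p.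
Proof. by rewrite /epsmap; case: ifP => _; [apply: actL | rewrite scaler0 addr0]. Qed.

Lemma eps_homact x v i p : epsmap act (act x v) i p = homact x (epsmap act v i) p.
Proof.
rewrite /homact /epsmap act_mul.
case: (boolP (phead p == i)) => Hp; case E: (pmul p x) => [r|] //=;
  by rewrite (pmul_phead E) ?Hp ?(negbTE Hp).
Qed.

Lemma g_lin (c : R) kappa kappa' a p :
  gmap act (fun i q => c *: kappa i q + kappa' i q) a p
  = c *: gmap act kappa a p + gmap act kappa' a p.
Proof.
rewrite /gmap; case: ifP => _; last by rewrite scaler0 addr0.
by rewrite evo_lin actL scalerBr opprD addrACA.
Qed.

Lemma g_homact x kappa a p :
  gmap act (fun i => homact x (kappa i)) a p = homact x (gmap act kappa a) p.
Proof.
rewrite {2}/homact (_ : pmul p x = omul (Some p) (Some x)) // evo_gmap /gmap.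
case: ifP => // _; congr (_ - _).
by rewrite evo_homact -omul_assoc.
Qed.

Lemma m_lin (c : R) gamma gamma' i p :
  mmap act Q0' (fun a q => c *: gamma a q + gamma' a q) i p
  = c *: mmap act Q0' gamma i p + mmap act Q0' gamma' i p.
Proof.
rewrite /mmap; case: ifP => _; last by rewrite scaler0 addr0.
rewrite scaler_sumr -big_split; apply: eq_bigr => a _.
rewrite /= evo_lin actL scalerA mulrC -scalerA -scalerDr; congr (_ *: _).
by rewrite scalerDr addrACA.
Qed.

Lemma m_homact x gamma i p :
  mmap act Q0' (fun a => homact x (gamma a)) i p = homact x (mmap act Q0' gamma i) p.
Proof.
case: (boolP (i \in Q0')) => Hi; last first.
  rewrite /homact /mmap (negbTE Hi) /=; by case: (pmul p x).
rewrite {2}/homact (_ : pmul p x = omul (Some p) (Some x)) // evo_mmap // /mmap Hi /=.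
case: ifP => // _; apply: eq_bigr => a _; congr (_ *: (_ + _)).
by rewrite evo_homact (omul_assoc (Some (ap a)) (Some p) (Some x)).
Qed.


Lemma eps_inj v : (forall i p, epsmap act v i p = 0) -> v = 0.
Proof.
move=> H; rewrite -(act_sume v) big1 // => i _.
by have := H i (ep i); rewrite /epsmap phead_epath eqxx.
Qed.

Lemma eps_ker kappa v : (forall i p, kappa i p = epsmap act v i p) ->
  forall a p, gmap act kappa a p = 0.
Proof.
move=> H a p; rewrite /gmap; case: ifP => // /eqP E.
rewrite (@evo_ext (kappa (dh a)) (epsmap act v (dh a))) // H.
have [r Hr Vr] := pmul_apath E; rewrite Hr /= /epsmap (pmul_phead Hr) phead_apath eqxx E eqxx.
by rewrite act_mul Hr subrr.
Qed.

Lemma ker_eps kappa : (forall i, Hom i i (kappa i)) ->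
  (forall a p, gmap act kappa a p = 0) ->
  forall i p, kappa i p = epsmap act (\sum_j kappa j (ep j)) i p.
Proof.
move=> Hk Hg; set v := \sum_j kappa j (ep j).
have key : forall s (p : qp), (val p).2 = s -> kappa (phead p) p = act p v.
  elim=> [|a s IH] p Hs.
    move: (phead p) (path_nil Hs) => i ->; rewrite /v act_sum (bigD1 i) //=.
    rewrite big1 ?addr0; first by rewrite (Hom_in (Hk i)).
    move=> j /negbTE N; apply: (act_inV (Hom_in (Hk j) (ep j))).
    by rewrite ptail_epath eq_sym N.
  have [p' Vp' Hp'] := path_decomp Hs.
  have Ep : phead p = dh a by rewrite (pmul_phead Hp').
  have Ep' : phead p' = dt a by rewrite /phead Vp'.
  rewrite Ep; have := Hg a p'; rewrite /gmap Ep' eqxx Hp' /= => /eqP; rewrite subr_eq0 => /eqP ->.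
  by rewrite -Ep' IH ?Vp' // act_mul Hp'.
move=> i p; rewrite /epsmap; case: eqP => [<-|/eqP N]; last by rewrite (Hom_off (Hk i)).
exact: key.
Qed.

Lemma im_g_ker_m (gamma : darrow Q1 -> qp -> V) :
  (exists kappa, (forall i, Hom i i (kappa i)) /\
                       forall a p, gamma a p = gmap act kappa a p) ->
  forall i p, i \in Q0' -> mmap act Q0' gamma i p = 0.
Proof.
move=> [kappa [Hk Hg]] i p Hi; rewrite /mmap Hi /=; case: ifP => // /eqP Ep.
have E1 : forall a, dt a == i ->
  (-1) ^+ dsgn a *: (act (ap (dbar a)) (gamma a p) + evo (gamma (dbar a)) (pmul (ap a) p))
  = (-1) ^+ dsgn a *: (evo (kappa i) (omul (Some (ap (dbar a))) (omul (Some (ap a)) (Some p)))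
                       - act (ap (dbar a)) (act (ap a) (kappa i p))).
  move=> a /eqP Ea; congr (_ *: _).
  rewrite (@evo_ext (gamma (dbar a)) (gmap act kappa (dbar a))) // Hg.
  have [r Hr Vr] := @pmul_apath _ _ t h a p (etrans Ep (esym Ea)).
  rewrite Hr /= /gmap (pmul_phead Hr) phead_apath dt_dbar eqxx Ep Ea eqxx /= Hr.
  rewrite dh_dbar Ea /= actB.
  by rewrite addrC addrA addrNK.
rewrite (eq_bigr _ E1) reindex_dbar.
pose X b := evo (kappa i) (omul (Some (ap b)) (omul (Some (ap (dbar b))) (Some p))).
pose Y b := act (ap b) (act (ap (dbar b)) (kappa i p)).
rewrite (eq_bigr (fun b => (-1) ^+ dsgn b *: Y b - (-1) ^+ dsgn b *: X b)); last first.
  by move=> b _; rewrite dbarK sign_dbar scaleNr scalerBr opprB.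
under eq_bigl do rewrite dt_dbar.
rewrite sumrB.
have HX : \sum_(b | dh b == i) (-1) ^+ dsgn b *: X b = lambda i *: kappa i p.
  have := Hom_kill (Hk i) (Some (ep i)) p.
  rewrite (@KF_ext _ (fun o => evo (kappa i) o)) => [|o]; last first.
    exact: (evo_ep _ (Hom_off (Hk i))).
  rewrite KF_in ?Ep // /T => /eqP; rewrite subr_eq0 => /eqP ->.
  by rewrite /= pmul_epath_l.
have HY : \sum_(b | dh b == i) (-1) ^+ dsgn b *: Y b = lambda i *: kappa i p.
  have := Rel_single Hi (Hom_in (Hk i) p).
  by rewrite /Rel (Hom_in (Hk i) p) => /eqP; rewrite subr_eq0 => /eqP.
by rewrite HX HY subrr.
Qed.


Fixpoint Kw (gamma : darrow Q1 -> qp -> V) (s : seq (darrow Q1)) : V :=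
  match s with
  | [::] => 0
  | a :: s' => act (ap a) (Kw gamma s') + evo (gamma a) (@insub _ _ qp (dt a, s'))
  end.

Definition Kdef gamma i (p : qp) := if phead p == i then Kw gamma (val p).2 else 0.

Lemma Kw_cons gamma a (r r' : qp) : phead r = dt a -> pmul (ap a) r = Some r' ->
  Kw gamma (val r').2 = act (ap a) (Kw gamma (val r).2) + gamma a r.
Proof.
move=> E H; have [_ ->] := pmul_inv H; rewrite /= -E.
by rewrite /phead -surjective_pairing valK.
Qed.

Section Construct.
Variable gamma : darrow Q1 -> qp -> V.
Hypothesis Hg : forall a, Hom (dt a) (dh a) (gamma a).
Hypothesis Hm : forall i p, i \in Q0' -> mmap act Q0' gamma i p = 0.
Local Notation kappa := (Kdef gamma).

Lemma K_off i p : phead p != i -> kappa i p = 0.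
Proof. by rewrite /Kdef => /negbTE ->. Qed.

Lemma K_in i p : act (ep i) (kappa i p) = kappa i p.
Proof.
rewrite /Kdef; case: ifP => [/eqP Ep|_]; last by rewrite act0.
case Es: (val p).2 => [|a s] /=; first by rewrite act0.
have [p' Vp' Hp'] := path_decomp Es.
have Ea : i = dh a by rewrite -Ep (pmul_phead Hp').
by rewrite actD Ea act_e_ap evo_inV //; apply: Hom_in (Hg a).
Qed.

Lemma gK a p : gmap act kappa a p = gamma a p.
Proof.
rewrite /gmap; case: ifP => [/eqP E|/negbT N]; last by rewrite (Hom_off (Hg a)).
have [r Hr Vr] := pmul_apath E.
rewrite Hr /= /Kdef (pmul_phead Hr) phead_apath eqxx E eqxx (Kw_cons gamma E Hr).
by rewrite [_ + gamma a p]addrC addrK.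
Qed.

Lemma evo_K i x o : evo (kappa i) (omul (Some x) o) =
  if phead x == i then evo (fun r => Kw gamma (val r).2) (omul (Some x) o) else 0.
Proof. by rewrite (@evo_omul_gen _ (evo (fun r => Kw gamma (val r).2)) (fun j => j == i)). Qed.

Lemma K_base i y : KF (fun o => evo (kappa i) o) y = 0.
Proof.
case: (boolP (phead y \in Q0')) => Hy; last by rewrite KF_out.
rewrite KF_in // /T /= pmul_epath_l //.
set w := Kw gamma (val y).2.
have Hb : forall b, dh b == phead y -> exists r1 r2,
   [/\ pmul (ap (dbar b)) y = Some r1, pmul (ap b) r1 = Some r2, phead r2 = phead y
     & Kw gamma (val r2).2 = act (ap b) (act (ap (dbar b)) w + gamma (dbar b) y) + gamma b r1].
  move=> b /eqP Eb.
  have E1 : phead y = dt (dbar b) by rewrite dt_dbar.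
  have [r1 H1 V1] := pmul_apath E1.
  have E2 : phead r1 = dt b by rewrite (pmul_phead H1) phead_apath dh_dbar.
  have [r2 H2 V2] := pmul_apath E2.
  exists r1, r2; split => //; first by rewrite (pmul_phead H2) phead_apath.
  by rewrite (Kw_cons gamma E2 H2) (Kw_cons gamma E1 H1).
have [Ei|Ni] := eqVneq (phead y) i; last first.
  rewrite big1 ?sub0r; first by rewrite /= /Kdef (negbTE Ni) scaler0 oppr0.
  move=> b Eb; have [r1 [r2 [H1 H2 Ph K]]] := Hb b Eb.
  by rewrite H1 /= H2 /= /Kdef Ph (negbTE Ni) scaler0.
rewrite (eq_bigr (fun b => (-1) ^+ dsgn b *: act (ap b) (act (ap (dbar b)) w)
   + (-1) ^+ dsgn b *: (act (ap b) (gamma (dbar b) y) + evo (gamma b) (pmul (ap (dbar b)) y))));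
  last first.
  move=> b Eb; have [r1 [r2 [H1 H2 Ph K]]] := Hb b Eb.
  by rewrite H1 /= H2 /= /Kdef Ph Ei eqxx K actD -scalerDr addrA.
rewrite big_split /= addrAC.
have HR : \sum_(b | dh b == phead y) (-1) ^+ dsgn b *: act (ap b) (act (ap (dbar b)) w)
   - lambda (phead y) *: Kdef gamma i y = 0.
  have Hw : act (ep (phead y)) w = w.
    by have := K_in i y; rewrite /Kdef Ei eqxx.
  have := Rel_single Hy Hw; rewrite /Rel Hw /Kdef Ei eqxx; done.
rewrite HR add0r.
have := Hm y Hy; rewrite /mmap Hy eqxx /= reindex_dbar.
move=> H; apply/eqP; rewrite -oppr_eq0 -sumrN; apply/eqP; rewrite -[RHS]H.
apply: eq_big => b; first by rewrite dt_dbar.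
by move=> _; rewrite dbarK sign_dbar scaleNr.
Qed.

Lemma K_kill s : forall (x : qp), (val x).2 = s ->
  forall i y, KF (fun o => evo (kappa i) (omul (Some x) o)) y = 0.
Proof.
elim: s => [|a s IH] x Hs i y.
  case: (eqVneq (phead x) i) => Ex; last first.
    rewrite (@KF_ext _ (fun o => 0)) => [|o]; last by rewrite evo_K (negbTE Ex).
    exact: KF0.
  move: (path_nil Hs); rewrite Ex => ->.
  rewrite (@KF_ext _ (fun o => evo (kappa i) o)) => [|o]; first exact: K_base.
  by apply: evo_ep => p; apply: K_off.
have [x' Vx' Hx'] := path_decomp Hs.
case: (eqVneq (phead x) i) => Ex; last first.
  rewrite (@KF_ext _ (fun o => 0)) => [|o]; last by rewrite evo_K (negbTE Ex).
  exact: KF0.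
have Ei : i = dh a by rewrite -Ex (pmul_phead Hx').
have Ex' : phead x' = dt a by rewrite /phead Vx'.
rewrite (@KF_ext _ (fun o => act (ap a) (evo (kappa (dt a)) (omul (Some x') o))
     + evo (gamma a) (omul (Some x') o))) => [|o].
  rewrite KF_add (@KF_lin (act (ap a)) (fun o => evo (kappa (dt a)) (omul (Some x') o)));
    last exact: actL.
  by rewrite (IH x') ?Vx' // (Hom_kill (Hg a)) act0 add0r.
have -> : Some x = omul (Some (ap a)) (Some x') by rewrite /= Hx'.
rewrite omul_assoc; case E: (omul (Some x') o) => [r|] /=; last by rewrite act0 addr0.
have Er : phead r = dt a by rewrite (omul_phead E).
have [r' Hr' Vr'] := pmul_apath Er.
rewrite Hr' /= /Kdef (pmul_phead Hr') phead_apath Ei eqxx Er eqxx.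
exact: Kw_cons.
Qed.

Lemma K_hom i : Hom i i (kappa i).
Proof.
apply: mk_Hom; [exact: K_off | exact: K_in |].
by move=> x y; apply: K_kill.
Qed.

Lemma ker_m_im : exists kappa, (forall i, Hom i i (kappa i)) /\
                       forall a p, gamma a p = gmap act kappa a p.
Proof. by exists kappa; split; [exact: K_hom | move=> a p; rewrite gK]. Qed.

End Construct.

End Mod.

Unset Implicit Arguments.
Theorem proposition2p1
  (R : comPzRingType) (Q0 Q1 : finType) (t h : Q1 -> Q0)
  (Q0' : {set Q0}) (lambda : Q0 -> R)
  (V : lmodType R) (act : qpath t h -> V -> V) :
  Q0' != set0 ->
  is_Amodule Q0' lambda act ->
  let Hom i j k := is_Hom Q0' lambda act i j k in
  let eps := epsmap act in
  let g := gmap act in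
  let m := mmap act Q0' in
  (* the three maps are well defined *)
  [/\ forall v, forall i, Hom i i (eps v i),
      forall kappa, (forall i, Hom i i (kappa i)) ->
        forall a, Hom (dt t h a) (dh t h a) (g kappa a)
    & forall gamma, (forall a, Hom (dt t h a) (dh t h a) (gamma a)) ->
        forall i, i \in Q0' -> Hom i i (m gamma i)] /\
  (* they are homomorphisms of left A-modules *)
  [/\ (forall (c : R) v w i p, eps (c *: v + w) i p = c *: eps v i p + eps w i p)
      /\ (forall x v i p, eps (act x v) i p = homact x (eps v i) p),
      (forall (c : R) kappa kappa' a p,
          g (fun i q => c *: kappa i q + kappa' i q) a p
          = c *: g kappa a p + g kappa' a p)
      /\ (forall x kappa a p,
          g (fun i => homact x (kappa i)) a p = homact x (g kappa a) p)
    & (forall (c : R) gamma gamma' i p,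
          m (fun a q => c *: gamma a q + gamma' a q) i p
          = c *: m gamma i p + m gamma' i p)
      /\ (forall x gamma i p,
          m (fun a => homact x (gamma a)) i p = homact x (m gamma i) p)] /\
  (* exactness *)
  [/\ forall v, (forall i p, eps v i p = 0) -> v = 0,
      forall kappa, (forall i, Hom i i (kappa i)) ->
        ((forall a p, g kappa a p = 0) <->
         exists v, forall i p, kappa i p = eps v i p)
    & forall gamma, (forall a, Hom (dt t h a) (dh t h a) (gamma a)) ->
        ((forall i p, i \in Q0' -> m gamma i p = 0) <->
         exists kappa, (forall i, Hom i i (kappa i)) /\
                       forall a p, gamma a p = g kappa a p)].

Proof.
move=> _ HA; cbv zeta.
split; last split; split.
- by move=> v i; apply: (eps_hom HA).
- by move=> kappa Hk; apply: (g_hom HA).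
- by move=> gamma Hg; apply: (m_hom HA).
- by split; [move=> *; apply: (eps_lin HA) | move=> *; apply: (eps_homact HA)].
- by split; [move=> *; apply: (g_lin HA) | move=> *; apply: (g_homact HA)].
- by split; [move=> *; apply: (m_lin HA) | move=> *; apply: (m_homact HA)].
- by move=> v; apply: (eps_inj HA).
- move=> kappa Hk; split => [Hg|[v Hv]].
    by exists (\sum_j kappa j (epath t h j)); apply: (ker_eps HA).
  by apply: (eps_ker HA Hv).
- move=> gamma Hg; split => [Hm|H].
    by apply: (ker_m_im HA).
  by move=> i p Hi; apply: (im_g_ker_m HA H).
Qed.
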